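(* Let $k,n$ be integers with $2\le k\le n$. Then $d^E_2(n,k)\le \max\{d^E_2(n-1,k-1),\,d^E_2(n-2,k-2)\}$.
   Context: For $k\le n$, $d^E_2(n,k)$ denotes the largest minimum distance among all binary Euclidean LCD $[n,k]$ codes, i.e. $k$-dimensional subspaces $C\subseteq\mathbb{F}_2^n$ with $C\cap C^{\perp_E}=\{0\}$, where $C^{\perp_E}$ is the dual with respect to $\langle x,y\rangle_E=\sum x_iy_i$. *)

(* Defs.v *)
From mathcomp Require Import all_boot all_order all_algebra.
Set Implicit Arguments. Unset Strict Implicit. Unset Printing Implicit Defensive.
Import GRing.Theory.

(* Binary linear codes of length n and dimension k are represented by a
   generator matrix G : 'M['F_2]_(k, n) with linearly independent rows
   (row_free G); the code is the row space of G. *)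

Local Open Scope ring_scope.

Definition ipE n (x y : 'rV['F_2]_n) : 'F_2 := \sum_(i < n) x 0 i * y 0 i.

Definition in_code k n (G : 'M['F_2]_(k, n)) (x : 'rV['F_2]_n) : bool :=
  (x <= G)%MS.

Definition in_dualE k n (G : 'M['F_2]_(k, n)) (x : 'rV['F_2]_n) : bool :=
  [forall y : 'rV['F_2]_n, in_code G y ==> (ipE x y == 0)].

Definition LCD_E k n (G : 'M['F_2]_(k, n)) : bool :=
  [forall x : 'rV['F_2]_n, (in_code G x && in_dualE G x) ==> (x == 0)].

Local Close Scope ring_scope.

Definition wt n (x : 'rV['F_2]_n) : nat := #|[set i : 'I_n | x ord0 i != 0%R]|.

(* Minimum distance = minimum weight of a nonzero codeword; for the zero
   code (no nonzero codeword) the convention is n+1 ("infinite"). *)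
Definition dmin k n (G : 'M['F_2]_(k, n)) : nat :=
  \big[minn/n.+1]_(x : 'rV['F_2]_n | in_code G x && (x != 0%R)) wt x.

Definition dE2 (n k : nat) : nat :=
  \max_(G : 'M['F_2]_(k, n) | row_free G && LCD_E G) dmin G.

(* Main.v *)
Require Import Defs.
From mathcomp Require Import all_boot all_order all_algebra.
From mathcomp Require Import zify ring.
Set Implicit Arguments. Unset Strict Implicit. Unset Printing Implicit Defensive.
Import GRing.Theory.
Local Open Scope ring_scope.

Lemma ipE_mx n (x y : 'rV['F_2]_n) : ipE x y = (x *m y^T) 0 0.
Proof. by rewrite /ipE !mxE; apply: eq_bigr => i _; rewrite mxE. Qed.

Lemma ipEC n (x y : 'rV['F_2]_n) : ipE x y = ipE y x.
Proof. by rewrite /ipE; apply: eq_bigr => i _; rewrite mulrC. Qed.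

Lemma ipEDr n (x y z : 'rV['F_2]_n) : ipE x (y + z) = ipE x y + ipE x z.
Proof. by rewrite /ipE -big_split; apply: eq_bigr => i _; rewrite mxE mulrDr. Qed.

Lemma ipEZr n a (x y : 'rV['F_2]_n) : ipE x (a *: y) = a * ipE x y.
Proof. by rewrite /ipE mulr_sumr; apply: eq_bigr => i _; rewrite mxE mulrCA. Qed.

Lemma ipE0l n (y : 'rV['F_2]_n) : ipE 0 y = 0.
Proof. by rewrite /ipE big1 // => i _; rewrite mxE mul0r. Qed.

Lemma F2_1 (z : 'F_2) : z != 0 -> z = 1.
Proof. by case: z => [[|[|m]] //= Hm] _; apply: val_inj. Qed.

Lemma LCD_EP k n (G : 'M['F_2]_(k,n)) : LCD_E G -> forall x, (x <= G)%MS ->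
  (forall y, (y <= G)%MS -> ipE x y = 0) -> x = 0.
Proof.
move=> /forallP H x xG hy; apply/eqP; move/implyP: (H x); apply.
rewrite /in_code xG /=; apply/forallP => y; apply/implyP => yG; apply/eqP; exact: hy.
Qed.

Lemma LCD_E_intro k n (G : 'M['F_2]_(k,n)) :
  (forall x, (x <= G)%MS -> (forall y, (y <= G)%MS -> ipE x y = 0) -> x = 0) -> LCD_E G.
Proof.
move=> H; apply/forallP => x; apply/implyP => /andP[xG /forallP hd]; apply/eqP.
by apply: H => // y yG; exact/eqP/(implyP (hd y)).
Qed.

Lemma gram_unit k n (G : 'M['F_2]_(k,n)) : row_free G -> LCD_E G -> G *m G^T \in unitmx.
Proof.
move=> rf lcd; rewrite -row_free_unit; apply/negPn/negP => nrf.
have: kermx (G *m G^T) != 0 by rewrite kermx_eq0.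
case/rowV0Pn => b /sub_kermxP bM bnz.
suff : b *m G = 0 by move/eqP; rewrite mulmx_free_eq0 // (negbTE bnz).
apply: (LCD_EP lcd (submxMl b G)) => y /submxP [a ->].
by rewrite ipE_mx trmx_mul mulmxA -(mulmxA b) bM mul0mx mxE.
Qed.

Definition Rz k n (G : 'M['F_2]_(k,n)) (i : 'I_n) : 'rV['F_2]_n :=
  (col i G)^T *m invmx (G *m G^T) *m G.

Lemma RzP k n (G : 'M['F_2]_(k,n)) i : G *m G^T \in unitmx ->
  forall c, (c <= G)%MS -> ipE (Rz G i) c = c 0 i.
Proof.
move=> Mu c /submxP [a ->]; rewrite ipE_mx /Rz trmx_mul !mulmxA -(mulmxA _ G) mulmxKV //.
rewrite -trmx_mul mxE !mxE; apply: eq_bigr => j _; by rewrite !mxE.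
Qed.

Lemma bigmin_le_seq (I : eqType) (r : seq I) (P : pred I) (F : I -> nat) m i :
  i \in r -> P i -> (\big[minn/m]_(j <- r | P j) F j <= F i)%N.
Proof.
elim: r => // a r IH; rewrite inE big_cons => /predU1P[-> ->|ir Pi]; first exact: geq_minl.
case: ifP => _; last exact: IH.
by rewrite geq_min IH ?orbT.
Qed.

Lemma dmin_le k n (G : 'M['F_2]_(k,n)) x : (x <= G)%MS -> x != 0 -> (dmin G <= wt x)%N.
Proof. by move=> xG xnz; apply: bigmin_le_seq; rewrite ?mem_index_enum // /in_code xG. Qed.

Lemma dmin_ge k n (G : 'M['F_2]_(k,n)) d : (d <= n.+1)%N ->
  (forall x, (x <= G)%MS -> x != 0 -> (d <= wt x)%N) -> (d <= dmin G)%N.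
Proof.
move=> dn H; rewrite /dmin; apply: (big_ind (fun m => d <= m)%N) => //.
  by move=> a b ha hb; rewrite leq_min ha hb.
by move=> x /andP[]; apply: H.
Qed.

Lemma wt_le n (x : 'rV['F_2]_n) : (wt x <= n)%N.
Proof. by rewrite /wt -[X in (_ <= X)%N]card_ord max_card. Qed.

Lemma wt_le1 n (x : 'rV['F_2]_n.+1) i : x 0 i = 0 -> (wt x <= n)%N.
Proof.
move=> xi; rewrite /wt.
apply: (@leq_trans #|[set~ i]|); last by rewrite cardsC1 card_ord.
apply: subset_leq_card; apply/subsetP => t; rewrite !inE; apply: contraNneq => ->.
by rewrite xi.
Qed.

Definition van N N' (S : 'I_N' -> 'I_N) (x : 'rV['F_2]_N) :=
  forall t, (forall b, S b != t) -> x 0 t = 0.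

Definition Pm N N' (S : 'I_N' -> 'I_N) : 'M['F_2]_(N, N') := \matrix_(t, b) (t == S b)%:R.

Lemma mulPE N N' (S : 'I_N' -> 'I_N) (x : 'rV['F_2]_N) b : (x *m Pm S) 0 b = x 0 (S b).
Proof.
rewrite mxE (bigD1 (S b)) //= mxE eqxx mulr1 big1 ?addr0 // => t /negbTE tS.
by rewrite mxE tS mulr0.
Qed.

Lemma mulPPt N N' (S : 'I_N' -> 'I_N) (x : 'rV['F_2]_N) : injective S -> van S x ->
  x *m Pm S *m (Pm S)^T = x.
Proof.
move=> injS vx; apply/rowP => t; rewrite mxE.
case: (pickP (fun b => S b == t)) => [b0 /eqP Sb0|none].
  rewrite (bigD1 b0) //= big1 ?addr0.
    by rewrite mulPE !mxE Sb0 eqxx mulr1.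
  move=> b bb0; rewrite !mxE; case: eqP => [tSb|]; last by rewrite mulr0.
  by case/eqP: bb0; apply: injS; rewrite -tSb.
rewrite big1; first by rewrite vx // => b; rewrite none.
by move=> b _; rewrite !mxE; case: eqP => [tSb|]; [move: (none b); rewrite tSb eqxx | rewrite mulr0].
Qed.

Lemma ipE_P N N' (S : 'I_N' -> 'I_N) (x y : 'rV['F_2]_N) : injective S -> van S x ->
  ipE (x *m Pm S) (y *m Pm S) = ipE x y.
Proof. by move=> injS vx; rewrite !ipE_mx trmx_mul mulmxA mulPPt. Qed.

Lemma wt_P N N' (S : 'I_N' -> 'I_N) (x : 'rV['F_2]_N) : injective S -> van S x ->
  wt (x *m Pm S) = wt x.
Proof.
move=> injS vx; rewrite /wt.
have -> : [set t | x ord0 t != 0] = S @: [set b | (x *m Pm S) ord0 b != 0].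
  apply/setP => t; rewrite inE; apply/idP/imsetP.
    case: (pickP (fun b => S b == t)) => [b /eqP Sb|none] xt.
      by exists b => //; rewrite inE mulPE Sb.
    by move: xt; rewrite vx ?eqxx // => b; rewrite none.
  by case=> b; rewrite inE mulPE => xb ->.
by rewrite card_imset.
Qed.

Lemma shortenC m N N' (r : nat) (S : 'I_N' -> 'I_N) (A : 'M['F_2]_(m, N)) : injective S ->
  \rank A = r ->
  (forall x, (x <= A)%MS -> van S x) ->
  (forall x, (x <= A)%MS -> (forall y, (y <= A)%MS -> ipE x y = 0) -> x = 0) ->
  exists G' : 'M['F_2]_(r, N'), [/\ row_free G', LCD_E G' &
     forall x', (x' <= G')%MS -> x' != 0 -> exists2 x, (x <= A)%MS /\ x != 0 & wt x = wt x'].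
Proof.
move=> injS rk hv hnd.
have APPt : A *m Pm S *m (Pm S)^T = A.
  apply/row_matrixP => i; rewrite !row_mul mulPPt //; exact/hv/row_sub.
have rkAP : \rank (A *m Pm S) = r.
  apply/eqP; rewrite eqn_leq -{1}rk mxrankM_maxl /= -{1}rk -{1}APPt mxrankM_maxl.
  by [].
rewrite -rkAP; exists (row_base (A *m Pm S)); split.
- exact: row_base_free.
- apply: LCD_E_intro => x'; rewrite eq_row_base => /submxP [a ->] hy.
  have := hnd (a *m A) (submxMl _ _).
  rewrite mulmxA => -> //; first by rewrite mul0mx.
  move=> y yA; rewrite -(ipE_P _ injS); last exact/hv/submxMl.
  rewrite -mulmxA; apply: hy.
  rewrite eq_row_base; move/submxP: yA => [b ->]; rewrite -mulmxA; exact: submxMl.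
- move=> x'; rewrite eq_row_base => /submxP [a ->] nz; exists (a *m A).
    split; first exact: submxMl.
    by apply: contraNneq nz; rewrite mulmxA => ->; rewrite mul0mx.
  by rewrite mulmxA wt_P //; apply/hv/submxMl.
Qed.

Lemma coordE k n (G : 'M['F_2]_(k,n)) (c : 'rV_k) i : (c *m col i G) 0 0 = (c *m G) 0 i.
Proof. by rewrite !mxE; apply: eq_bigr => j _; rewrite !mxE. Qed.

Lemma mx11_eq0 (z : 'M['F_2]_1) : (z == 0) = (z 0 0 == 0).
Proof.
apply/eqP/eqP => [->|h]; first by rewrite mxE.
by apply/matrixP => a b; rewrite !ord1 h mxE.
Qed.

Lemma memker k n p (G : 'M['F_2]_(k,n)) (H : 'M['F_2]_(k,p)) (c : 'rV_k) : row_free G ->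
  (c *m G <= kermx H *m G)%MS = (c *m H == 0).
Proof.
move=> rf; apply/idP/idP.
  case/submxP => a; rewrite mulmxA => /(row_free_inj rf) ->.
  by rewrite -mulmxA mulmx_ker mulmx0.
move/eqP/sub_kermxP/submxP => [a ->]; rewrite -mulmxA; exact: submxMl.
Qed.

Lemma memD1 k n (G : 'M['F_2]_(k,n)) i (x : 'rV['F_2]_n) : row_free G ->
  (x <= kermx (col i G) *m G)%MS = (x <= G)%MS && (x 0 i == 0).
Proof.
move=> rf; apply/idP/andP => [xD|[/submxP [c ->] xi]].
  have xG : (x <= G)%MS by apply: submx_trans xD (submxMl _ _).
  split=> //; move/submxP: xG => [c cx]; move: xD.
  by rewrite cx memker // mx11_eq0 coordE.
by rewrite memker // mx11_eq0 coordE.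
Qed.

Lemma memD2 k n (G : 'M['F_2]_(k,n)) i j (x : 'rV['F_2]_n) : row_free G ->
  (x <= kermx (row_mx (col i G) (col j G)) *m G)%MS = [&& (x <= G)%MS, x 0 i == 0 & x 0 j == 0].
Proof.
move=> rf; apply/idP/and3P => [xD|[/submxP [c ->] xi xj]].
  have xG : (x <= G)%MS by apply: submx_trans xD (submxMl _ _).
  split=> //; move/submxP: xG => [c cx]; move: xD;
  by rewrite cx memker // mul_mx_row row_mx_eq0 !mx11_eq0 !coordE => /andP[].
by rewrite memker // mul_mx_row row_mx_eq0 !mx11_eq0 !coordE xi xj.
Qed.

Lemma step k n (G : 'M['F_2]_(k.+2, n.+2)) : row_free G -> LCD_E G ->
  (exists G1 : 'M['F_2]_(k.+1, n.+1), [/\ row_free G1, LCD_E G1 & (dmin G <= dmin G1)%N]) \/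
  (exists G2 : 'M['F_2]_(k, n), [/\ row_free G2, LCD_E G2 & (dmin G <= dmin G2)%N]).
Proof.
move=> rf lcd.
have Mu := gram_unit rf lcd.
have nd := LCD_EP lcd.
have : G != 0.
  by apply/eqP => G0; move: rf; rewrite /row_free G0 mxrank0.
case/matrix0Pn => r [i Gri].
pose u := Rz G i.
have hu : forall c, (c <= G)%MS -> ipE u c = c 0 i := RzP i Mu.
have uG : (u <= G)%MS by apply: submxMl.
clearbody u.
pose cr := row r G.
have crG : (cr <= G)%MS := row_sub r G.
have cri : cr 0 i != 0 by rewrite mxE.
have unz : u != 0.
  by apply: contraNneq cri => u0; rewrite -hu // u0 ipE0l.
have du : (dmin G <= wt u)%N := dmin_le uG unz.
pose D1 := kermx (col i G) *m G.
have mD1 : forall x : 'rV['F_2]_n.+2, (x <= D1)%MS = (x <= G)%MS && (x 0 i == 0) := fun x => memD1 i x rf.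
have rkD1 : \rank D1 = k.+1.
  apply/eqP; rewrite eqn_leq; apply/andP; split.
    have : (D1 < G)%MS.
      rewrite ltmxE submxMl /=; apply/negP => GD.
      by have := submx_trans crG GD; rewrite mD1 (negbTE cri) andbF.
    by move/rank_ltmx; move: rf; rewrite /row_free => /eqP ->.
  rewrite /D1 mxrankMfree // mxrank_ker; have := rank_leq_col (col i G); lia.
have [ui0 | uinz] := eqVneq (u 0 i) 0; last first.
  left.
  have ui1 : u 0 i = 1 := F2_1 uinz.
  have vanD1 : forall x, (x <= D1)%MS -> van (lift i) x.
    move=> x; rewrite mD1 => /andP[_ /eqP xi] t ht.
    case: (unliftP i t) => [t' tE|->] //.
    by move: (ht t'); rewrite tE eqxx.
  have ndD1 : forall x : 'rV['F_2]_n.+2, (x <= D1)%MS -> (forall y : 'rV['F_2]_n.+2, (y <= D1)%MS -> ipE x y = 0) -> x = 0.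
    move=> x xD hy; move: (xD); rewrite mD1 => /andP[xG /eqP xi].
    apply: (nd x xG) => c cG.
    have yD : ((c + (- c 0 i) *: u)%R <= D1)%MS.
      rewrite mD1 (addmx_sub cG (scalemx_sub _ uG)) /= !mxE ui1.
      by rewrite mulr1 subrr.
    have := hy _ yD; rewrite ipEDr ipEZr (ipEC x u) hu // xi mulr0 addr0.
    done.
  have [G1 [rf1 lcd1 hw]] := @shortenC _ _ n.+1 k.+1 (lift i) D1 (@lift_inj _ i) rkD1 vanD1 ndD1.
  exists G1; split => //.
  apply: dmin_ge; first exact: leq_trans du (wt_le u).
  move=> x' x'G x'nz; have [x [xD xnz] <-] := hw x' x'G x'nz.
  apply: dmin_le xnz; by move: xD; rewrite mD1 => /andP[].
right.
have [j ujnz] : exists j, u 0 j != 0.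
  case: (pickP (fun j => u 0 j != 0)) => [j ?|none]; first by exists j.
  case/eqP: unz; apply/rowP => t; move: (none t) => /negbFE/eqP ->; by rewrite mxE.
have uj1 : u 0 j = 1 := F2_1 ujnz.
have jni : j != i by apply: contraNneq ujnz => ->; rewrite ui0.
pose v := Rz G j.
have hv : forall c, (c <= G)%MS -> ipE v c = c 0 j := RzP j Mu.
have vG : (v <= G)%MS by apply: submxMl.
clearbody v.
have vi1 : v 0 i = 1 by rewrite -hu // ipEC hv // uj1.
pose D2 := kermx (row_mx (col i G) (col j G)) *m G.
have mD2 : forall x : 'rV['F_2]_n.+2, (x <= D2)%MS = [&& (x <= G)%MS, x 0 i == 0 & x 0 j == 0] :=
  fun x => memD2 i j x rf.
have rkD2 : \rank D2 = k.
  have : (D2 < D1)%MS.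
    rewrite ltmxE; apply/andP; split.
      apply/row_subP => a; rewrite mD1.
      by have := row_sub a D2; rewrite mD2 => /and3P[-> -> _].
    apply/negP => D1D2.
    have uD1 : (u <= D1)%MS by rewrite mD1 uG ui0 eqxx.
    by have := submx_trans uD1 D1D2; rewrite mD2 (negbTE ujnz) !andbF.
  move/rank_ltmx; rewrite rkD1 => lt.
  apply/eqP; rewrite eqn_leq; apply/andP; split; first by [].
  rewrite /D2 mxrankMfree // mxrank_ker; have := rank_leq_col (row_mx (col i G) (col j G)); lia.
case: (unliftP i j) => [j' jE|jE]; last by rewrite jE eqxx in jni.
pose S2 := fun b : 'I_n => lift i (lift j' b).
have S2inj : injective S2 by move=> a b /lift_inj /lift_inj.
have vanD2 : forall x, (x <= D2)%MS -> van S2 x.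
  move=> x; rewrite mD2 => /and3P[_ /eqP xi /eqP xj] t ht.
  case: (unliftP i t) => [t' tE|->] //.
  case: (unliftP j' t') => [b bE|bE].
    by move: (ht b); rewrite /S2 tE bE eqxx.
  by rewrite tE bE -jE.
have ndD2 : forall x : 'rV['F_2]_n.+2, (x <= D2)%MS -> (forall y : 'rV['F_2]_n.+2, (y <= D2)%MS -> ipE x y = 0) -> x = 0.
  move=> x xD hy; move: (xD); rewrite mD2 => /and3P[xG /eqP xi /eqP xj].
  apply: (nd x xG) => c cG.
  pose al := c 0 j - c 0 i * v 0 j.
  have yD : ((c + (- al) *: u + (- c 0 i) *: v)%R <= D2)%MS.
    rewrite mD2 (addmx_sub (addmx_sub cG (scalemx_sub _ uG)) (scalemx_sub _ vG)) /=.
    rewrite !mxE ui0 uj1 vi1 /al; apply/andP; split; apply/eqP; ring.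
  have := hy _ yD; rewrite !ipEDr !ipEZr (ipEC x u) (ipEC x v) hu // hv // xi xj.
  by rewrite !mulr0 !addr0.
have [G2 [rf2 lcd2 hw]] := @shortenC _ _ n k S2 D2 S2inj rkD2 vanD2 ndD2.
exists G2; split => //.
apply: dmin_ge; first exact: leq_trans du (wt_le1 ui0).
move=> x' x'G x'nz; have [x [xD xnz] <-] := hw x' x'G x'nz.
apply: dmin_le xnz; by move: xD; rewrite mD2 => /and3P[].
Qed.

Local Close Scope ring_scope.

Theorem corollary4p4 (k n : nat) :
  2 <= k -> k <= n ->
  dE2 n k <= maxn (dE2 (n - 1) (k - 1)) (dE2 (n - 2) (k - 2)).
Proof.
case: k => [|[|k]] // _; case: n => [|[|n]] // hkn.
rewrite !subSS !subn0.
apply/bigmax_leqP => G /andP[rfG lcdG].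
have [[G1 [rf1 lcd1 d1]]|[G2 [rf2 lcd2 d2]]] := step rfG lcdG.
  apply: leq_trans d1 _; apply: leq_trans (leq_maxl _ _).
  by apply: leq_bigmax_cond; rewrite rf1 lcd1.
apply: leq_trans d2 _; apply: leq_trans (leq_maxr _ _).
by apply: leq_bigmax_cond; rewrite rf2 lcd2.
Qed.
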